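(* Run WSU-UX with $K=2$ and any valid $(\eta,\gamma)$ on the two-phase loss sequence. Let $t_0>T_1$ be a round with $0<\pi_{t_0,1}\le\frac14$. Suppose arm 2 is pulled (i.e. $I_s=2$) in rounds $t_1<t_2<\dots<t_m$ with $t_0\le t_1$ and $t_m\le T$, where $m\ge \frac{2}{\eta}\cdot\frac{1}{1-2\pi_{t_0,1}}$. Then $\pi_{t_m+1,1}\ge 2\pi_{t_0,1}$.
   Context: WSU-UX. Fix integers $K\ge 2$ and $T\ge 1$ and hyperparameters $\eta,\gamma$. The pair $(\eta,\gamma)$ is called valid if $\eta,\gamma\in(0,1/2)$ and $\eta K/\gamma\le 1/2$. Given a fixed loss sequence $\ell_t\in[0,1]^K$, WSU-UX sets $\pi_{1,i}=1/K$ and in each round $t$: forms $\tilde\pi_{t,i}=(1-\gamma)\pi_{t,i}+\gamma/K$; draws $I_t$ with $\Pr(I_t=i\mid\mathcal F_{t-1})=\tilde\pi_{t,i}$; sets $\hat\ell_{t,i}=\ell_{t,i}\mathbf 1[I_t=i]/\tilde\pi_{t,i}$; and updates $\pi_{t+1,i}=\pi_{t,i}\bigl(1-\eta(\hat\ell_{t,i}-\sum_{j}\pi_{t,j}\hat\ell_{t,j})\bigr)$; $\mathcal F_t$ is the history generated by $I_1,\dots,I_t$. Two-phase loss sequence ($K=2$, $T$ a multiple of $100$, $T_1=T/100$): $\ell_{t,1}=1,\ell_{t,2}=0$ for $1\le t\le T_1$ and $\ell_{t,1}=0,\ell_{t,2}=1$ for $T_1<t\le T$. (For $t>T_1$, rounds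 in which arm 1 is pulled leave $\pi_t$ unchanged.) *)

(* Defs.v *)
(* WSU-UX along a fixed realization of the pulls. *)
From mathcomp Require Import all_boot all_order all_algebra.
Set Implicit Arguments. Unset Strict Implicit. Unset Printing Implicit Defensive.
Import Order.TTheory GRing.Theory Num.Theory.
Local Open Scope ring_scope.

Section WSU.
Variables (R : realFieldType) (K : nat) (eta gamma : R).
Variable loss : nat -> 'I_K -> R.
Variable I : nat -> 'I_K.

Definition valid_params : Prop :=
  [/\ 0 < eta, eta < 1/2, 0 < gamma, gamma < 1/2 & eta * K%:R / gamma <= 1/2].

Definition wsu_tilde (p : 'I_K -> R) (i : 'I_K) : R :=
  (1 - gamma) * p i + gamma / K%:R.

Definition wsu_lhat (t : nat) (p : 'I_K -> R) (i : 'I_K) : R :=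
  loss t i * (I t == i)%:R / wsu_tilde p i.

Definition wsu_step (t : nat) (p : 'I_K -> R) : 'I_K -> R :=
  fun i => p i * (1 - eta * (wsu_lhat t p i - \sum_(j < K) p j * wsu_lhat t p j)).

(* wsu_pi t = pi_t for t >= 1 (rounds numbered from 1); wsu_pi 0 is junk. *)
Fixpoint wsu_pi (t : nat) : 'I_K -> R :=
  match t with
  | 0 | 1 => fun _ => 1 / K%:R
  | t'.+1 => wsu_step t' (wsu_pi t')
  end.
End WSU.

(* Two-phase loss sequence for K = 2, T1 = T/100.  Arm 1 of the paper is
   the ordinal 0, arm 2 is the ordinal 1. *)
Definition two_phase_loss (R : realFieldType) (T : nat) (t : nat) (i : 'I_2) : R :=
  if (t <= T %/ 100)%N then (if val i == 0%N then 1 else 0)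
  else (if val i == 0%N then 0 else 1).

Definition arm1 : 'I_2 := @Ordinal 2 0 isT.
Definition arm2 : 'I_2 := @Ordinal 2 1 isT.

(* Main.v *)
Require Import Defs.
From mathcomp Require Import all_boot all_order all_algebra.
From mathcomp Require Import ring lra.
Import Order.TTheory GRing.Theory Num.Theory.
Local Open Scope ring_scope.
Set Implicit Arguments. Unset Strict Implicit.

Section Proof.
Variables (R : realFieldType) (T : nat) (eta gamma : R) (I : nat -> 'I_2).
Hypothesis Hv : valid_params 2 eta gamma.

Local Notation P := (wsu_pi eta gamma (two_phase_loss R T) I).

Lemma sum2 (F : 'I_2 -> R) : \sum_(j < 2) F j = F arm1 + F arm2.
Proof.
rewrite big_ord_recl big_ord_recl big_ord0 addr0.
by congr (F _ + F _); apply: val_inj.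
Qed.

Lemma ord2_cases (i : 'I_2) : i = arm1 \/ i = arm2.
Proof.
case: i => [[|[|n]] H]; [left|right|by []]; exact: val_inj.
Qed.

Lemma piS t : (1 <= t)%N -> P t.+1 = wsu_step eta gamma (two_phase_loss R T) I t (P t).
Proof. by case: t. Qed.

Lemma eta_gam : 0 < eta /\ 0 < gamma /\ gamma < 1/2 /\ eta <= gamma / 4.
Proof.
case: Hv => e0 e1 g0 g1 H.
rewrite ler_pdivrMr // in H.
by split => //; split => //; split => //; lra.
Qed.

Lemma loss01 t i : 0 <= two_phase_loss R T t i <= 1.
Proof.
rewrite /two_phase_loss; case: (t <= _)%N; case: (val i == 0)%N;
  apply/andP; split; lra.
Qed.

Lemma hbound (x d : R) : 0 < d -> 0 <= x <= 1 -> eta <= d -> eta * (x / d) <= 1.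
Proof.
move=> d0 /andP[x0 x1] ed.
rewrite mulrA ler_pdivrMr // mul1r.
have [e0 _] := eta_gam. nra.
Qed.

Lemma hnonneg (x d : R) : 0 < d -> 0 <= x -> 0 <= x / d.
Proof. by move=> d0 x0; rewrite divr_ge0 // ltW. Qed.

Lemma inv t : 0 <= P t arm1 /\ 0 <= P t arm2 /\ P t arm1 + P t arm2 = 1.
Proof.
have [e0 [g0 [g1 eg]]] := eta_gam.
elim: t => [|t [p0 [p1 ps]]].
  rewrite /=; split; [|split]; lra.
case: t p0 p1 ps => [|t] p0 p1 ps.
  rewrite /=; split; [|split]; lra.
rewrite piS //.
set p := P t.+1 in p0 p1 ps *.
rewrite /wsu_step sum2.
set h := wsu_lhat gamma (two_phase_loss R T) I t.+1 p.
have hprop : forall i, 0 <= h i /\ eta * h i <= 1.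
  move=> i; rewrite /h /wsu_lhat.
  have d0 : 0 < wsu_tilde gamma p i.
    rewrite /wsu_tilde; case: (ord2_cases i) => ->; nra.
  have dge : eta <= wsu_tilde gamma p i.
    rewrite /wsu_tilde; case: (ord2_cases i) => ->; nra.
  have x01 : 0 <= two_phase_loss R T t.+1 i * (I t.+1 == i)%:R <= 1.
    have /andP[l0 l1] := loss01 t.+1 i.
    case: (I t.+1 == i); rewrite /= ?mulr1 ?mulr0; apply/andP; split; lra.
  split; first by apply: hnonneg => //; case/andP: x01.
  exact: hbound.
have [h10 h11] := hprop arm1.
have [h20 h21] := hprop arm2.
set S := p arm1 * h arm1 + p arm2 * h arm2.
have S0 : 0 <= S by rewrite /S; nra.
have eS : 0 <= eta * S by apply: mulr_ge0; lra.
split; [|split].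
- apply: mulr_ge0 => //; rewrite mulrBr; lra.
- apply: mulr_ge0 => //; rewrite mulrBr; lra.
- have -> : p arm2 = 1 - p arm1 by lra.
  rewrite /S; have -> : p arm2 = 1 - p arm1 by lra.
  ring.
Qed.

Lemma step2 t : (T %/ 100 < t)%N ->
  P t arm1 <= P t.+1 arm1 /\
  (I t = arm2 -> P t arm1 + eta * P t arm1 * (1 - P t arm1) <= P t.+1 arm1).
Proof.
move=> Ht.
have [e0 [g0 [g1 eg]]] := eta_gam.
have t1 : (1 <= t)%N by apply: leq_ltn_trans Ht.
have [p0 [p1 ps]] := inv t.
rewrite piS //.
set p := P t in p0 p1 ps *.
have Hl : forall i, two_phase_loss R T t i = if val i == 0%N then 0 else 1.
  by move=> i; rewrite /two_phase_loss leqNgt Ht.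
rewrite /wsu_step sum2 /wsu_lhat !Hl /=.
case: (ord2_cases (I t)) => ->.
  have -> : (arm1 == arm1) = true by [].
  have -> : (arm1 == arm2) = false by [].
  rewrite /= !(mul0r, mulr0, add0r, addr0, subr0, sub0r, oppr0, mulr1).
  by split => // H; discriminate.
have -> : (arm2 == arm1) = false by [].
have -> : (arm2 == arm2) = true by [].
rewrite /= !(mul0r, mulr0, add0r, addr0, sub0r, mulr1, mul1r).
idtac.
set d := wsu_tilde gamma p arm2.
have d0 : 0 < d by rewrite /d /wsu_tilde; nra.
have d1 : d <= 1 by rewrite /d /wsu_tilde; nra.
have q : p arm2 <= p arm2 * d^-1.
  rewrite -[X in X <= _]mulr1 -(mulfV (lt0r_neq0 d0)) mulrA.
  apply: ler_wpM2r; first by rewrite invr_ge0 ltW.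
  rewrite -[X in _ <= X]mulr1. by apply: ler_wpM2l.
have q0 : 0 <= p arm2 * d^-1 by nra.
move: q q0; set z := p arm2 / d => q q0.
have e1 : p arm1 * (1 - eta * - z) = p arm1 + eta * (p arm1 * z) by ring.
rewrite e1.
have pz : 0 <= p arm1 * z by apply: mulr_ge0.
split; first by nra.
move=> _.
have : p arm1 * (1 - p arm1) <= p arm1 * z.
  apply: ler_wpM2l => //; lra.
move=> h; have := ler_wpM2l (ltW e0) h; rewrite mulrA; lra.
Qed.

Lemma mono t s : (T %/ 100 < t)%N -> (t <= s)%N -> P t arm1 <= P s arm1.
Proof.
move=> Ht; elim: s => [|s IH]; first by rewrite leqn0 => /eqP ->.
rewrite leq_eqVlt => /orP[/eqP <- // | ].
rewrite ltnS => ts; apply: le_trans (IH ts) _.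
by case: (@step2 s (leq_trans Ht ts)).
Qed.

End Proof.

Lemma realstep (R : realFieldType) (eta a x y n : R) :
  0 < eta -> 0 < a -> a <= 1/4 -> a <= x -> x <= 1 ->
  x + eta * x * (1 - x) <= y ->
  (2 * a <= x \/ a + n * (eta * a * (1 - 2 * a)) <= x) ->
  (2 * a <= y \/ a + (n + 1) * (eta * a * (1 - 2 * a)) <= y).
Proof.
move=> e0 a0 a1 ax x1 xy.
have ex0 : 0 <= eta * x * (1 - x) by apply: mulr_ge0; [apply: mulr_ge0; lra | lra].
case: (lerP (2 * a) x) => hx.
  by move=> _; left; lra.
case => [hx' | H]; first by lra.
right.
have : eta * a * (1 - 2 * a) <= eta * x * (1 - x).
  have : a * (1 - 2 * a) <= x * (1 - x).
    have h1 : 0 <= (x - a) * (1 - x) by apply: mulr_ge0; lra.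
    have h2 : 0 <= a * (2 * a - x) by apply: mulr_ge0; lra.
    have -> : x * (1 - x) = (x - a) * (1 - x) + a * (2 * a - x) + a * (1 - 2 * a) by ring.
    lra.
  move=> h; nra.
lra.
Qed.

Theorem mainTheorem15 (R : realFieldType) (T : nat) (eta gamma : R)
  (I : nat -> 'I_2) (t0 m : nat) (tt : nat -> nat) :
  (1 <= T)%N -> (100 %| T)%N ->
  valid_params 2 eta gamma ->
  (T %/ 100 < t0)%N ->
  0 < wsu_pi eta gamma (two_phase_loss R T) I t0 arm1 ->
  wsu_pi eta gamma (two_phase_loss R T) I t0 arm1 <= 1/4 ->
  (forall k, (1 <= k)%N -> (k < m)%N -> (tt k < tt k.+1)%N) ->
  (t0 <= tt 1%N)%N -> (tt m <= T)%N ->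
  (forall k, (1 <= k)%N -> (k <= m)%N -> I (tt k) = arm2) ->
  (2 / eta) * (1 / (1 - 2 * wsu_pi eta gamma (two_phase_loss R T) I t0 arm1))
    <= m%:R ->
  2 * wsu_pi eta gamma (two_phase_loss R T) I t0 arm1
    <= wsu_pi eta gamma (two_phase_loss R T) I (tt m).+1 arm1.
Proof.
move=> T1 T100 Hv Ht0 a0 a1 Hinc Htt1 HttT Hpull Hm.
set P := wsu_pi eta gamma (two_phase_loss R T) I in a0 a1 Hm *.
set a := P t0 arm1 in a0 a1 Hm *.
have [e0 _] := eta_gam Hv.
have tge : forall k, (1 <= k)%N -> (k <= m)%N -> (t0 <= tt k)%N.
  elim => [//|k IH] _ km.
  case: k IH km => [|k] IH km; first by [].
  apply: leq_trans (IH isT (ltnW km)) _.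
  exact: ltnW (Hinc k.+1 isT km).
have Hk : forall k, (k < m)%N ->
   2 * a <= P (tt k.+1).+1 arm1 \/
   a + (k.+1)%:R * (eta * a * (1 - 2 * a)) <= P (tt k.+1).+1 arm1.
  elim => [|k IH] km.
  - have T0 : (T %/ 100 < tt 1)%N by apply: leq_trans Htt1.
    have [_ st] := step2 I Hv T0.
    have ax : a <= P (tt 1) arm1 by apply: (mono I Hv).
    have [x0 [x1' xs]] := inv T I Hv (tt 1).
    have -> : ((0.+1)%:R : R) = 0 + 1 by rewrite add0r.
    apply: (realstep (x := P (tt 1) arm1) (n := 0)) => //.
    + rewrite /P; lra.
    + by apply: st; apply: Hpull.
    + by right; rewrite mul0r addr0.
  - have IH' := IH (ltnW km).
    have tk : (t0 <= tt k.+2)%N by apply: tge.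
    have T0 : (T %/ 100 < tt k.+2)%N by apply: leq_trans tk.
    have [_ st] := step2 I Hv T0.
    have ax : a <= P (tt k.+2) arm1 by apply: (mono I Hv).
    have [x0 [x1' xs]] := inv T I Hv (tt k.+2).
    have mid : P (tt k.+1).+1 arm1 <= P (tt k.+2) arm1.
      apply: (mono I Hv).
      + apply: leq_trans Ht0 _; apply: leq_trans (tge k.+1 isT (ltnW km)) _.
        exact: leqnSn.
      + exact: Hinc.
    rewrite -(natr1 k.+1).
    apply: (realstep (x := P (tt k.+2) arm1)) => //.
    + rewrite /P; lra.
    + by apply: st; apply: Hpull.
    + case: IH' => h; [left|right]; lra.
case: m Hinc Htt1 HttT Hpull Hm tge Hk => [|m] Hinc Htt1 HttT Hpull Hm tge Hk.
  exfalso.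
  have : 0 < 2 / eta * (1 / (1 - 2 * a)).
    apply: mulr_gt0; apply: divr_gt0; lra.
  lra.
have H2 : 2 <= m.+1%:R * eta * (1 - 2 * a).
  have hp : 0 < eta * (1 - 2 * a) by apply: mulr_gt0; lra.
  have := ler_wpM2r (ltW hp) Hm.
  have -> : 2 / eta * (1 / (1 - 2 * a)) * (eta * (1 - 2 * a)) = 2.
    field; apply/andP; split; apply/eqP; lra.
  by rewrite mulrA.
case: (Hk m (ltnSn m)) => h; first by [].
nra.
Qed.
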